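(* Let $\mathscr B=\{b_k:k\ge1\}$ and $\mathscr B'=\{b'_k:k\ge1\}$ be subsets of $\{2,3,\dots\}$, each consisting of pairwise coprime integers with $\sum_k 1/b_k<\infty$ and $\sum_k1/b'_k<\infty$. Then: (a) $X_{\mathscr B}\subset X_{\mathscr B'}$ if and only if every $b'\in\mathscr B'$ is divisible by some $b\in\mathscr B$; (b) $X_{\mathscr B}=X_{\mathscr B'}$ if and only if $\mathscr B=\mathscr B'$.
   Context: For such a set $\mathscr B$, $X_{\mathscr B}$ denotes the $\mathscr B$-free subshift: the set of $y\in\{0,1\}^{\mathbb Z}$ all of whose finite blocks occur in $\eta$, where $\eta(n)=1$ iff $b\nmid n$ for all $b\in\mathscr B$ (else $0$). Equivalently, $X_{\mathscr B}$ is the set of $y\in\{0,1\}^{\mathbb Z}$ whose support $\mathrm{supp}(y)=\{n:y(n)=1\}$ is $\mathscr B$-admissible, i.e. $|\mathrm{supp}(y)\bmod b|<b$ for every $b\in\mathscr B$. *)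

(* Defs.v *)
From HB Require Import structures.
From mathcomp Require Import all_boot all_order all_algebra.
Set Implicit Arguments. Unset Strict Implicit. Unset Printing Implicit Defensive.
Import Order.TTheory GRing.Theory Num.Theory.
Local Open Scope ring_scope.

(* A set B = {b_k : k >= 0} of positive integers is given by its enumeration
   b : nat -> nat. *)

(* Standing hypotheses on B: b_k >= 2, pairwise coprime, sum 1/b_k < oo
   (partial sums of a series of positive terms are bounded). *)
Definition admissible_set (b : nat -> nat) : Prop :=
  [/\ (forall k, (2 <= b k)%N),
      (forall i j, i <> j -> coprime (b i) (b j)) &
      exists M : rat, forall n : nat, \sum_(k < n) ((b k)%:R)^-1 <= M].

Definition eta_one (b : nat -> nat) (n : int) : Prop :=
  forall k, ~ ((b k)%:Z %| n)%Z.

(* X_B: all y in {0,1}^Z (true = 1) all of whose finite blocks occur in eta. *)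
Definition in_X (b : nat -> nat) (y : int -> bool) : Prop :=
  forall (m : int) (L : nat), exists n : int,
    forall i : nat, (i < L)%N -> (y (m + i%:Z) = true <-> eta_one b (n + i%:Z)).

(* Main.v *)
Set Warnings "-notation-overridden -ambiguous-paths".
Require Import Defs.
From mathcomp Require Import all_boot all_order all_algebra zify ring lra.
From Stdlib Require Import Classical ClassicalEpsilon.
Set Implicit Arguments. Unset Strict Implicit. Unset Printing Implicit Defensive.
Import Order.TTheory GRing.Theory Num.Theory.
Local Open Scope ring_scope.

Definition ib (b : nat -> nat) k : rat := ((b k)%:R)^-1.

Lemma ib_ge0 b k : 0 <= ib b k.
Proof. by rewrite /ib invr_ge0 ler0n. Qed.

Lemma sum_ib_ge0 b m N : 0 <= \sum_(m <= k < N) ib b k.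
Proof. by apply: sumr_ge0 => k _; apply: ib_ge0. Qed.

Lemma tail b (Hb : admissible_set b) (e : rat) : 0 < e ->
  exists a, forall m N, (a <= m)%N -> \sum_(m <= k < N) ib b k <= e.
Proof.
move=> e0; case: Hb => H2 Hc [M HM].
case: (classic (exists a, forall m N, (a <= m)%N -> \sum_(m <= k < N) ib b k <= e)) => // Hn.
exfalso.
have step : forall a, exists N, (a <= N)%N /\ e < \sum_(a <= k < N) ib b k.
  move=> a; apply: NNPP => Hno; apply: Hn; exists a => m N Ham.
  rewrite leNgt; apply/negP => Hlt; apply: Hno; exists N.
  have mN : (m <= N)%N.
    rewrite leqNgt; apply/negP => HNm.
    by move: Hlt; rewrite big_geq ?(ltnW HNm) // => /(lt_trans e0); rewrite ltxx.
  split; first exact: leq_trans Ham mN.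
  rewrite (big_cat_nat Ham mN) /=.
  apply: (lt_le_trans Hlt); rewrite lerDr; exact: sum_ib_ge0.
have ind : forall t : nat, exists N, t%:R * e <= \sum_(0 <= k < N) ib b k.
  elim=> [|t [N HN]]; first by exists 0%N; rewrite mul0r big_geq.
  have [N' [NN' HN']] := step N.
  exists N'; rewrite (big_cat_nat (leq0n N) NN') /= -natr1 mulrDl mul1r.
  by rewrite lerD // ltW.
have M0 : 0 <= M by have := HM 0%N; rewrite big_ord0.
have [N HN] := ind (Num.Def.archi_bound (M / e)).
have := HM N; rewrite -(big_mkord xpredT (fun k => ((b k)%:R)^-1)) => HMN.
have := archi_boundP (divr_ge0 M0 (ltW e0)).
rewrite ltr_pdivrMr // => Hlt.
have := le_trans HN HMN.
by move=> /(lt_le_trans Hlt); rewrite ltxx.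
Qed.

Lemma tail_elem b (Hb : admissible_set b) (c : nat) : (0 < c)%N ->
  exists a, (forall m N, (a <= m)%N -> \sum_(m <= k < N) ib b k <= (c%:R)^-1)
     /\ forall j, (a <= j)%N -> (c <= b j)%N.
Proof.
move=> c0; have e0 : 0 < (c%:R)^-1 :> rat by rewrite invr_gt0 ltr0n.
have [a Ha] := tail Hb e0.
exists a; split => // j aj.
have := Ha j j.+1 aj; rewrite big_nat1 /ib.
case: Hb => H2 _ _.
rewrite lef_pV2 ?posrE ?ltr0n //; last exact: leq_trans (H2 j).
by rewrite ler_nat.
Qed.
Local Open Scope nat_scope.
Lemma coprime_prod (m : nat -> nat) F c :
  (forall j, j < F -> coprime (m j) c) -> coprime (\prod_(j < F) m j) c.
Proof.
elim: F => [|F IH] H; first by rewrite big_ord0 coprime1n.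
rewrite big_ord_recr /= coprimeMl IH ?H //.
by move=> j jF; apply: H; apply: ltnW.
Qed.

Lemma dvdn_prod_ord (m : nat -> nat) F j : j < F -> m j %| \prod_(k < F) m k.
Proof.
move=> jF; rewrite (bigD1 (Ordinal jF)) //=; exact: dvdn_mulr.
Qed.

Lemma crt (m : nat -> nat) (rho : nat -> nat) F :
  (forall i j, i <> j -> coprime (m i) (m j)) ->
  exists x, forall j, j < F -> x = rho j %[mod m j].
Proof.
move=> Hc; elim: F => [|F [x Hx]]; first by exists 0.
set P := \prod_(k < F) m k.
have cP : coprime P (m F).
  by apply: coprime_prod => j jF; apply: Hc => E; move: jF; rewrite E ltnn.
exists (chinese P (m F) x (rho F)) => j; rewrite ltnS leq_eqVlt => /orP [/eqP->|jF].
  by rewrite chinese_modr.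
have dj : m j %| P by exact: dvdn_prod_ord.
rewrite -(modn_dvdm _ dj) chinese_modl // (modn_dvdm _ dj); exact: Hx.
Qed.

Lemma class_count (bb P a T : nat) : 0 < bb -> coprime bb P ->
  \sum_(t < T) (bb %| a + P * t) <= T %/ bb + 1.
Proof.
move=> b0 cP.
rewrite -big_mkcond /= sum1_card.
set A := [pred t : 'I_T | bb %| a + P * t].
have inj : {in A &, injective (fun t : 'I_T => (inord (t %/ bb) : 'I_(T %/ bb).+1))}.
  have key : forall t1 t2 : 'I_T, t1 \in A -> t2 \in A -> t1 <= t2 ->
      t1 %/ bb = t2 %/ bb -> t1 = t2.
    move=> t1 t2 A1 A2 le12 eq12.
    have d : bb %| t2 - t1.
      rewrite -(Gauss_dvdr _ cP) mulnBr.
      have -> : P * t2 - P * t1 = (a + P * t2) - (a + P * t1) by lia.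
      exact: dvdn_sub.
    apply: val_inj => /=; apply/eqP; rewrite eqn_leq le12 /=.
    rewrite leqNgt; apply/negP => lt12.
    have hp : 0 < t2 - t1 by rewrite subn_gt0.
    have := dvdn_leq hp d.
    have := divn_eq t1 bb; have := divn_eq t2 bb.
    have := ltn_pmod t1 b0; have := ltn_pmod t2 b0.
    rewrite eq12; lia.
  move=> t1 t2 A1 A2 /= E.
  have E' : t1 %/ bb = t2 %/ bb.
    move: E => /(congr1 val) /=; rewrite !inordK //; rewrite ltnS; apply: leq_div2r;
      apply: ltnW; exact: ltn_ord.
  case: (leqP t1 t2) => h; first exact: key.
  by apply/esym/key => //; apply: ltnW.
rewrite -(card_in_imset inj) addn1.
by apply: leq_trans (max_card _) _; rewrite card_ord.
Qed.
Local Open Scope ring_scope.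
Lemma arithA (L K2 P : nat) (u v : rat) : (1 <= P)%N ->
  0 <= u -> 0 <= v -> u * ((4*L+4)%N%:R) <= 1 -> v * (((4*L+4)*P)%N%:R) <= 1 ->
  L%:R * ((4*L*K2+L+3)%N%:R * u + K2%:R + ((4*L*K2+L+3)%N%:R + (2*P + P*(4*L*K2+L+3) + L)%N%:R) * v) < (4*L*K2+L+3)%N%:R.
Proof.
move=> P1 u0 v0 hu hv.
rewrite !natrD !natrM in hv hu *.
have Pr : 1 <= P%:R :> rat by rewrite ler1n.
set l := L%:R in hu hv *; set k := K2%:R; set p := P%:R in Pr hv *.
have l0 : 0 <= l by rewrite ler0n.
have k0 : 0 <= k by rewrite ler0n.
set t := (4 * l * k + l + 3).
have t0 : 0 <= t by rewrite /t; nra.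
have h1 : l * u <= 1/4 by nra.
have h2 : l * v * p <= 1/4 by nra.
have h3 : l * v <= 1/4 by nra.
have e1 : l * (t * u) <= t / 4 by nra.
have e2 : l * ((t + (2 * p + p * t + l)) * v) <= (t + 2 + t + l)/4.
  have -> : l * ((t + (2 * p + p * t + l)) * v) = (t + l) * (l * v) + (2 + t) * (l * v * p) by ring.
  nra.
rewrite /t in e1 e2 *; nra.
Qed.

Lemma leq_term_nat (F : nat -> nat) m n j : (m <= j)%N -> (j < n)%N ->
  (F j <= \sum_(m <= k < n) F k)%N.
Proof.
move=> mj jn; rewrite (big_cat_nat mj (ltnW jn)) /= (big_ltn jn).
exact: leq_trans (leq_addr _ _) (leq_addl _ _).
Qed.

Lemma mod_dvd_add d x y i : x = y %[mod d] -> (d %| x + i)%N = (d %| y + i)%N.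
Proof. by move=> E; rewrite /dvdn -modnDml E modnDml. Qed.

Lemma divn_ler (n d : nat) : (0 < d)%N -> (n %/ d)%:R <= n%:R * (d%:R)^-1 :> rat.
Proof.
move=> d0; rewrite -[_ * _^-1]/(_ / _) ler_pdivlMr ?ltr0n // -natrM ler_nat.
exact: leq_divM.
Qed.

Lemma le_inv_mul (u : rat) (c : nat) : (0 < c)%N -> u <= (c%:R)^-1 -> u * c%:R <= 1.
Proof. by move=> c0; rewrite -div1r ler_pdivlMr ?ltr0n. Qed.

Lemma hard b (Hb : admissible_set b) (s : nat -> bool) (L : nat) (r : nat -> nat) :
  (forall k i, (i < L)%N -> s i -> ~~ (b k %| r k + i)%N) ->
  exists n : nat, forall i, (i < L)%N -> (s i <-> forall k, ~~ (b k %| n + i)%N).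
Proof.
move=> Hr; have Hb' := Hb; case: Hb' => H2 Hc _.
have c1 : (0 < 4*L+4)%N by lia.
have [K1 [T1 B1]] := tail_elem Hb c1.
pose F0 := (K1 + L)%N.
pose rho j := if (K1 <= j)%N && ~~ s (j - K1)%N then (b j - (j - K1))%N else r j.
have Hrho : forall j i, (j < F0)%N -> (i < L)%N -> s i -> ~~ (b j %| rho j + i)%N.
  move=> j i jF iL si; rewrite /rho; case: ifP => [/andP [Kj ns]|_]; last exact: Hr.
  have bL := B1 j Kj.
  apply/negP => d.
  case: (ltngtP i (j - K1)) => h.
  - have p : (0 < b j - (j - K1) + i)%N by lia.
    have := dvdn_leq p d; lia.
  - move: d; have -> : (b j - (j - K1) + i = b j + (i - (j - K1)))%N by lia.
    rewrite dvdn_addr // => d.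
    have p : (0 < i - (j - K1))%N by lia.
    have := dvdn_leq p d; lia.
  - by move: ns; rewrite -h si.
have Hzero : forall i, (i < L)%N -> ~~ s i -> (b (K1 + i) %| rho (K1 + i) + i)%N.
  move=> i iL ns; rewrite /rho leq_addr /= addKn ns /=.
  have := B1 (K1 + i)%N (leq_addr _ _) => bL.
  by rewrite subnK ?dvdnn //; lia.
have [n0' Hn0'] := @crt b rho F0 Hc.
pose P := (\prod_(j < F0) b j)%N.
have P0 : (0 < P)%N by rewrite prodn_gt0 // => j; exact: leq_trans (H2 j).
pose n0 := (n0' %% P + P)%N.
have Hdiv : forall t j i, (j < F0)%N -> (b j %| n0 + P * t + i)%N = (b j %| rho j + i)%N.
  move=> t j i jF; apply: mod_dvd_add.
  have dj : (b j %| P)%N by exact: dvdn_prod_ord.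
  rewrite -modnDmr (eqP (dvdn_mulr t dj)) addn0 /n0 -modnDmr (eqP dj) addn0.
  by rewrite modn_dvdm // Hn0'.
have copF : forall j, (F0 <= j)%N -> coprime (b j) P.
  move=> j Fj; rewrite coprime_sym; apply: coprime_prod => k kF.
  by apply: Hc => E; move: kF; rewrite E ltnNge Fj.
have c2 : (0 < (4*L+4)*P)%N by rewrite muln_gt0 P0 c1.
have [K2' [T2 _]] := tail_elem Hb c2.
pose K2 := maxn K2' F0.
pose T := (4*L*K2+L+3)%N.
pose X := (2*P + P*T + L)%N.
have [J' [_ BJ]] := tail_elem Hb (ltn0Sn X).
pose J := maxn J' K2.
pose good t := forall i, (i < L)%N -> s i -> forall j, (F0 <= j)%N -> ~~ (b j %| n0 + P * t + i)%N.
suff [t [tT gt]] : exists t, (t < T)%N /\ good t.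
  exists (n0 + P * t)%N => i iL; split.
    move=> si k; case: (ltnP k F0) => kF; first by rewrite Hdiv // Hrho.
    exact: gt.
  move=> Hall; apply: contraT => ns.
  have := Hall (K1 + i)%N; rewrite Hdiv ?Hzero //; rewrite /F0; lia.
apply: NNPP => Hno.
have n0P : (P <= n0 < 2 * P)%N by rewrite /n0; have := ltn_pmod n0' P0; lia.
have JK2 : (K2 <= J)%N by exact: leq_maxr.
have F0K2 : (F0 <= K2)%N by exact: leq_maxr.
have bad : forall t, (t < T)%N ->
    (1 <= \sum_(0 <= i < L) \sum_(F0 <= j < J) (b j %| n0 + P * t + i))%N.
  move=> t tT.
  have [i [j [iL [si [Fj d]]]]] : exists i j, (i < L)%N /\ s i /\ (F0 <= j)%N /\
      (b j %| n0 + P * t + i)%N.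
    apply: NNPP => H; apply: Hno; exists t; split => // i iL si j Fj.
    by apply/negP => d; apply: H; exists i, j.
  have jJ : (j < J)%N.
    rewrite ltnNge; apply/negP => Jj.
    have := BJ j (leq_trans (leq_maxl _ _) Jj).
    have pos : (0 < n0 + P * t + i)%N by lia.
    have := dvdn_leq pos d.
    have : (P * t <= P * T.-1)%N by rewrite leq_mul2l; apply/orP; right; lia.
    rewrite /X; lia.
  apply: leq_trans _ (leq_term_nat _ (leq0n i) iL).
  apply: leq_trans _ (leq_term_nat _ Fj jJ).
  by rewrite d.
have HT : (T <= \sum_(0 <= i < L) \sum_(F0 <= j < J) \sum_(0 <= t < T)
             (b j %| n0 + P * t + i))%N.
  have eT : (\sum_(0 <= t < T) 1 = T)%N by rewrite sumr_const_nat subn0 /=; lia.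
  rewrite -{1}eT.
  apply: leq_trans (_ : _ <= \sum_(0 <= t < T)
     \sum_(0 <= i < L) \sum_(F0 <= j < J) (b j %| n0 + P * t + i))%N _.
    rewrite big_mkord [X in (_ <= X)%N]big_mkord.
    by apply: leq_sum => t _; apply: bad.
  rewrite exchange_big_nat; apply: eq_leq; apply: eq_bigr => i _.
  exact: exchange_big_nat.
have valX : forall t i, (t < T)%N -> (i < L)%N -> (0 < n0 + P * t + i <= X)%N.
  move=> t i tT iL.
  have : (P * t <= P * T.-1)%N by rewrite leq_mul2l; apply/orP; right; lia.
  rewrite /X; lia.
have Cb1 : forall i j, (F0 <= j)%N ->
    ((\sum_(0 <= t < T) (b j %| n0 + P * t + i))%N%:R <= T%:R * ib b j + 1 :> rat).
  move=> i j Fj.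
  have c0 : (0 < b j)%N by exact: leq_trans (H2 j).
  have := @class_count (b j) P (n0 + i) T c0 (copF j Fj).
  rewrite -(big_mkord xpredT (fun t => (b j %| n0 + i + P * t)%N : nat)).
  under eq_bigr => t _ do rewrite addnAC.
  rewrite -(ler_nat rat) natrD => h; apply: le_trans h _.
  by rewrite lerD2r; exact: divn_ler.
have Cb2 : forall i j, (i < L)%N -> (K2 <= j)%N ->
    ((\sum_(0 <= t < T) (b j %| n0 + P * t + i))%N%:R <= T%:R * ib b j + X%:R * ib b j :> rat).
  move=> i j iL Kj.
  have c0 : (0 < b j)%N by exact: leq_trans (H2 j).
  case: (leqP (b j) X) => bX.
    have Fj : (F0 <= j)%N by exact: leq_trans F0K2 Kj.
    have := @class_count (b j) P (n0 + i) T c0 (copF j Fj).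
    rewrite -(big_mkord xpredT (fun t => (b j %| n0 + i + P * t)%N : nat)).
    under eq_bigr => t _ do rewrite addnAC.
    have : (1 <= X %/ b j)%N by rewrite divn_gt0.
    move=> h1 h; have h' := leq_trans h (leq_add (leqnn _) h1).
    rewrite -(ler_nat rat) natrD in h'; apply: le_trans h' _.
    by apply: lerD; exact: divn_ler.
  rewrite big1_seq /=; first by rewrite addr_ge0 // mulr_ge0 // ?ler0n ?ib_ge0.
  move=> t; rewrite mem_index_iota => /andP [_ tT].
  apply/eqP; rewrite eqb0; apply/negP => d.
  have := valX t i tT iL => /andP [p le].
  have := dvdn_leq p d; lia.
have HTr : (T%:R <= \sum_(0 <= i < L) \sum_(F0 <= j < J)
    ((\sum_(0 <= t < T) (b j %| n0 + P * t + i))%N%:R) :> rat).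
  move: HT; rewrite -(ler_nat rat) natr_sum.
  by under eq_bigr => i _ do rewrite natr_sum.
pose u := \sum_(F0 <= j < K2) ib b j.
pose v := \sum_(K2 <= j < J) ib b j.
have u0 : 0 <= u by exact: sum_ib_ge0.
have v0 : 0 <= v by exact: sum_ib_ge0.
have hu : u * (4*L+4)%N%:R <= 1 by apply: le_inv_mul => //; apply: T1; exact: leq_addr.
have hv : v * ((4*L+4)*P)%N%:R <= 1 by apply: le_inv_mul => //; apply: T2; exact: leq_maxl.
have Hi : forall i, (i < L)%N -> \sum_(F0 <= j < J)
    ((\sum_(0 <= t < T) (b j %| n0 + P * t + i))%N%:R) <= T%:R * u + K2%:R + (T%:R + X%:R) * v :> rat.
  move=> i iL; rewrite (big_cat_nat F0K2 JK2) /=.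
  apply: lerD.
    apply: le_trans (ler_sum_nat (G := fun j => T%:R * ib b j + 1) _) _.
      by move=> j /andP [Fj _]; apply: Cb1.
    rewrite big_split /= -mulr_sumr sumr_const_nat lerD2l.
    by rewrite -mulr_natl mulr1 ler_nat leq_subr.
  apply: le_trans (ler_sum_nat (G := fun j => (T%:R + X%:R) * ib b j) _) _.
    by move=> j /andP [Kj _]; rewrite mulrDl; apply: Cb2.
  by rewrite -mulr_sumr.
have Hi' : forall i, (0 <= i < L)%N -> \sum_(F0 <= j < J)
    ((\sum_(0 <= t < T) (b j %| n0 + P * t + i))%N%:R) <= T%:R * u + K2%:R + (T%:R + X%:R) * v :> rat.
  by move=> i /andP [_ iL]; exact: Hi.
have := le_trans HTr (ler_sum_nat (G := fun _ => T%:R * u + K2%:R + (T%:R + X%:R) * v) Hi').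
rewrite sumr_const_nat subn0 => HH.
have HH' := HH; rewrite -[X in _ <= X]mulr_natl in HH'.
have := arithA K2 P0 u0 v0 hu hv.
rewrite -/T -/X => HH2.
by have := le_lt_trans HH' HH2; rewrite ltxx.
Qed.

Lemma finite_choice (Q : nat -> nat -> Prop) n :
  (forall i, (i < n)%N -> exists t, Q i t) -> exists f : nat -> nat, forall i, (i < n)%N -> Q i (f i).
Proof.
elim: n => [|n IH] H; first by exists (fun _ => 0%N).
have [f Hf] := IH (fun i h => H i (ltnW h)).
have [t Ht] := H n (ltnSn n).
exists (fun i => if i == n then t else f i) => i; rewrite ltnS leq_eqVlt => /orP [/eqP->|h].
  by rewrite eqxx.
by rewrite (ltn_eqF h); apply: Hf.
Qed.

Lemma eta_nat (b : nat -> nat) (n i : nat) :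
  eta_one b (n%:Z + i%:Z) <-> forall k, ~~ (b k %| n + i)%N.
Proof.
rewrite /eta_one -PoszD; split => H k.
  by apply/negP => d; apply: (H k); rewrite dvdzE.
by rewrite dvdzE /=; apply/negP; exact: H.
Qed.

Lemma dvdz_congr (d m m' : int) : (m = m' %[mod d])%Z -> (d %| m)%Z = (d %| m')%Z.
Proof. by move=> E; apply/dvdz_mod0P/dvdz_mod0P; rewrite E. Qed.

Lemma absz_mod (n : int) (d : nat) : (0 < d)%N -> ((absz (n %% d%:Z)%Z)%:Z = (n %% d%:Z)%Z).
Proof. by move=> d0; rewrite gez0_abs // modz_ge0 // eqz_nat -lt0n. Qed.

Lemma incl_suff b b' : admissible_set b' -> (forall k, exists j, (b j %| b' k)%N) ->
  forall y, in_X b y -> in_X b' y.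
Proof.
move=> Hb' Hd y Hy m L; have [n Hn] := Hy m L.
have Hb'2 := Hb'; case: Hb'2 => H2 _ _.
pose r k := absz (n %% (b' k)%:Z)%Z.
have Hr : forall k i, (i < L)%N -> y (m + i%:Z) -> ~~ (b' k %| r k + i)%N.
  move=> k i iL yi; have [j dj] := Hd k.
  have eta := (Hn i iL).1 yi.
  apply/negP => d; apply: (eta j).
  apply: (@dvdz_trans (b' k)%:Z); first by rewrite dvdzE.
  have d' : ((b' k)%:Z %| (r k + i)%N%:Z)%Z by rewrite dvdzE.
  move: d'; rewrite PoszD absz_mod; last exact: leq_trans (H2 k).
  by rewrite (dvdz_congr (modzDml _ _ _)).
have [n' Hn'] := hard Hb' Hr.
by exists n'%:Z => i iL; rewrite eta_nat; exact: Hn'.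
Qed.

Lemma div_cycle (b b' : nat -> nat) :
  (forall j, (2 <= b j)%N) -> (forall i j, i <> j -> coprime (b i) (b j)) ->
  (forall k, exists j, (b j %| b' k)%N) -> (forall j, exists k, (b' k %| b j)%N) ->
  forall x, (exists k, b k = x) -> (exists k, b' k = x).
Proof.
move=> H2 Hc H1 H1' x [k <-].
have [l hl] := H1' k; have [k' hk'] := H1 l.
have dk : (b k' %| b k)%N := dvdn_trans hk' hl.
have kk : k' = k.
  apply: NNPP => ne; have := Hc _ _ ne; rewrite /coprime (gcdn_idPl dk) => /eqP e.
  by have := H2 k'; rewrite e.
exists l; apply/eqP; rewrite eqn_dvd hl /=; by rewrite -kk.
Qed.

Lemma incl_nec b b' : admissible_set b -> admissible_set b' ->
  (forall y, in_X b y -> in_X b' y) -> forall k, exists j, (b j %| b' k)%N.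
Proof.
move=> Hb Hb' Hsub k0; apply: NNPP => Hn.
have Hnd : forall j, ~~ (b j %| b' k0)%N by move=> j; apply/negP => d; apply: Hn; exists j.
have Hb2 := Hb; case: Hb2 => H2 Hc _.
have Hb'2 := Hb'; case: Hb'2 => H2' _ _.
set c := b' k0.
have c2 : (2 <= c)%N by exact: H2'.
have [K [_ BK]] := tail_elem Hb (ltn0Sn c).
have [t Ht] : exists t : nat -> nat, forall i, (i < c)%N -> forall j, (j < K)%N ->
    t i = (if (b j %| i)%N then 1 else 0)%N %[mod b j].
  apply: (@finite_choice (fun i t => forall j, (j < K)%N ->
    t = (if (b j %| i)%N then 1 else 0)%N %[mod b j]) c) => i _; exact: (@crt b (fun j => if (b j %| i)%N then 1 else 0)%N K Hc).
pose x i := (i + c * t i)%N.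
have xmod : forall i, (i < c)%N -> (x i %% c = i)%N.
  by move=> i ic; rewrite /x addnC mulnC modnMDl modn_small.
have xK : forall i j, (i < c)%N -> (j < K)%N -> ~~ (b j %| x i)%N.
  move=> i j ic jK; have E := Ht i ic j jK.
  have E2 : (i + c * t i = i + c * (if (b j %| i)%N then 1 else 0) %[mod b j])%N.
    by rewrite -modnDmr -modnMmr E modnMmr modnDmr.
  apply/negP => d.
  have d2 : (b j %| i + c * (if (b j %| i)%N then 1 else 0))%N by rewrite /dvdn -E2.
  move: d2; case: ifP => h.
    by rewrite muln1 dvdn_addr // => d3; move: (Hnd j); rewrite d3.
  by rewrite muln0 addn0 h.
have avoid : forall j, exists a, forall i, (i < c)%N -> (x i %% b j != a %% b j)%N.
  move=> j; case: (ltnP j K) => jK.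
    exists 0%N => i ic; rewrite mod0n; exact: xK.
  have bj0 : (0 < b j)%N by exact: leq_trans (H2 j).
  apply: NNPP => Hno.
  pose f (i : 'I_c) : 'I_(b j) := Ordinal (ltn_pmod (x i) bj0).
  have sub : forall a : 'I_(b j), a \in [seq f i | i in 'I_c].
    move=> a; apply: NNPP => na; apply: Hno; exists a => i ic.
    apply/negP => /eqP e; apply: na; apply/imageP; exists (Ordinal ic) => //.
    by apply: val_inj => /=; rewrite e modn_small.
  have : (#|'I_(b j)| <= #|'I_c|)%N.
    apply: leq_trans (leq_image_card f 'I_c).
    apply: subset_leq_card; apply/subsetP => a _; exact: sub.
  rewrite !card_ord; have := BK j jK; lia.
have [a Ha] : exists a : nat -> nat, forall j i, (i < c)%N -> (x i %% b j != a j %% b j)%N.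
  exists (fun j => proj1_sig (constructive_indefinite_description _ (avoid j))) => j.
  exact: proj2_sig (constructive_indefinite_description _ (avoid j)).
pose y (z : int) := [exists i : 'I_c, z == (x i)%:Z].
have HyX : in_X b y.
  move=> m L.
  pose r j := absz ((m - (a j)%:Z) %% (b j)%:Z)%Z.
  have Hr : forall j i, (i < L)%N -> y (m + i%:Z) -> ~~ (b j %| r j + i)%N.
    move=> j i iL /existsP [i' /eqP e]; apply/negP => d.
    have bj0 : (0 < b j)%N by exact: leq_trans (H2 j).
    have d' : ((b j)%:Z %| (r j + i)%N%:Z)%Z by rewrite dvdzE.
    move: d'; rewrite PoszD absz_mod //.
    rewrite (dvdz_congr (modzDml _ _ _)) -addrAC e -eqz_mod_dvd !modz_nat eqz_nat.
    by rewrite (negbTE (Ha j i' (ltn_ord i'))).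
  have [n Hn'] := hard Hb Hr.
  by exists n%:Z => i iL; rewrite eta_nat; exact: Hn'.
pose L := (\sum_(0 <= i < c) x i).+1.
have [n Hnn] := Hsub y HyX 0 L.
have c0 : (0 < c)%N by exact: leq_trans c2.
pose i0 := absz ((- n) %% c%:Z)%Z.
have i0c : (i0 < c)%N.
  by rewrite -ltz_nat absz_mod // ltz_pmod // ltz_nat.
have xL : (x i0 < L)%N by rewrite ltnS; exact: leq_term_nat.
have yx : y (0 + (x i0)%:Z) by rewrite add0r; apply/existsP; exists (Ordinal i0c).
apply: ((Hnn _ xL).1 yx k0).
rewrite /x PoszD PoszM absz_mod // -/c.
apply/dvdz_mod0P; rewrite addrA (addrC _ (_ * _)) mulrC modzMDl.
by rewrite modzDmr subrr mod0z.
Qed.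

Theorem mainTheorem13 (b b' : nat -> nat) :
  admissible_set b -> admissible_set b' ->
  ((forall y, in_X b y -> in_X b' y) <-> (forall k, exists j, (b j %| b' k)%N)) /\
  ((forall y, in_X b y <-> in_X b' y) <->
     (forall x : nat, (exists k, b k = x) <-> (exists k, b' k = x))).
Proof.
move=> Hb Hb'.
have A : forall b b', admissible_set b -> admissible_set b' ->
    ((forall y, in_X b y -> in_X b' y) <-> (forall k, exists j, (b j %| b' k)%N)).
  move=> c c' Hc Hc'; split; first exact: incl_nec.
  exact: incl_suff.
split; first exact: A.
split.
  move=> Heq x.
  have H1 := (A b b' Hb Hb').1 (fun y => (Heq y).1).
  have H1' := (A b' b Hb' Hb).1 (fun y => (Heq y).2).
  case: (Hb) => H2 Hc _; case: (Hb') => H2' Hc' _.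
  split; first exact: div_cycle H2 Hc H1 H1' x.
  exact: div_cycle H2' Hc' H1' H1 x.
move=> Hset.
have eta_eq : forall z, eta_one b z <-> eta_one b' z.
  move=> z; split => H k d.
    have [j ej] := (Hset (b' k)).2 (ex_intro _ k erefl).
    by apply: (H j); rewrite ej.
  have [j ej] := (Hset (b k)).1 (ex_intro _ k erefl).
  by apply: (H j); rewrite ej.
move=> y; split => Hy m L; have [n Hn] := Hy m L; exists n => i iL;
  move: (eta_eq (n + i%:Z)) (Hn i iL); tauto.
Qed.
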